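(* Let $\mathcal{L}_{\rm F}$ be the Fibonacci language and let ${\rm S}:\mathcal{L}_{\rm F}\to\mathbb{N}$ be a homomorphism. Let $\mathcal{E}=\{(1,1),(1,2),(1,3),(2,1)\}$. If $({\rm S}(0),{\rm S}(1))\in\mathcal{E}$ then $\mathbb{N}\setminus{\rm S}(\mathcal{L}_{\rm F})$ is empty; otherwise $\mathbb{N}\setminus{\rm S}(\mathcal{L}_{\rm F})$ is infinite.
   Context: $\mathbb{N}=\{1,2,3,\dots\}$ and $[x]$ denotes the integer part (floor) of $x$. Let $\Phi=(1+\sqrt5)/2$ and $\alpha=2-\Phi$. The characteristic word $c_\alpha=(c_\alpha(n))_{n\ge0}$ is the infinite word over $\{0,1\}$ with $c_\alpha(n)=[(n+2)\alpha]-[(n+1)\alpha]$ (the infinite Fibonacci word). The Fibonacci language $\mathcal{L}_{\rm F}$ is the set of all nonempty finite words occurring as factors of $c_\alpha$. A homomorphism ${\rm S}:\mathcal{L}_{\rm F}\to\mathbb{N}$ is a map with ${\rm S}(w_1\cdots w_n)={\rm S}(w_1)+\cdots+{\rm S}(w_n)$, determined by ${\rm S}(0),{\rm S}(1)\in\mathbb{N}$. *)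

(* Defs.v *)
From Stdlib Require Import Reals ZArith List Lia Lra.
Open Scope R_scope.

Definition Phi : R := (1 + sqrt 5) / 2.
Definition alpha : R := 2 - Phi.

Definition floorR (x : R) : Z := Int_part x.

Definition c_alpha (n : nat) : Z :=
  (floorR ((INR n + 2) * alpha) - floorR ((INR n + 1) * alpha))%Z.

Definition in_LF (w : list Z) : Prop :=
  w <> nil /\
  exists i : nat, forall k : nat, (k < length w)%nat -> nth k w 0%Z = c_alpha (i + k).

Definition S_letter (s0 s1 : nat) (x : Z) : nat := if Z.eqb x 0 then s0 else s1.
Definition S_hom (s0 s1 : nat) (w : list Z) : nat :=
  fold_right (fun x acc => (S_letter s0 s1 x + acc)%nat) 0%nat w.

Definition in_image (s0 s1 n : nat) : Prop :=
  exists w, in_LF w /\ S_hom s0 s1 w = n.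

Definition in_E (s0 s1 : nat) : Prop :=
  (s0, s1) = (1, 1)%nat \/ (s0, s1) = (1, 2)%nat \/
  (s0, s1) = (1, 3)%nat \/ (s0, s1) = (2, 1)%nat.

(* Main.v *)
Require Import Defs.
From Stdlib Require Import Reals ZArith List Lia Lra Psatz Classical.
Open Scope R_scope.

Lemma sqrt5_sq : sqrt 5 * sqrt 5 = 5.
Proof. apply sqrt_sqrt; lra. Qed.

Lemma sqrt5_bounds : 2.236 < sqrt 5 < 2.2361.
Proof. pose proof sqrt5_sq. pose proof (sqrt_pos 5). split; nra. Qed.

Lemma alpha_eq : alpha = (3 - sqrt 5) / 2.
Proof. unfold alpha, Phi. field. Qed.

Lemma alpha_bounds : 0.38 < alpha < 0.382.
Proof. rewrite alpha_eq. pose proof sqrt5_bounds. lra. Qed.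

Definition psi : R := (1 - sqrt 5) / 2.
Lemma alpha_psi : alpha = 1 + psi.
Proof. rewrite alpha_eq. unfold psi. field. Qed.
Lemma psi_sq : psi * psi = psi + 1.
Proof. unfold psi. pose proof sqrt5_sq. nra. Qed.
Lemma psi_bounds : -0.62 < psi < -0.61.
Proof. unfold psi. pose proof sqrt5_bounds. lra. Qed.

Lemma floor_spec x : IZR (floorR x) <= x < IZR (floorR x) + 1.
Proof. unfold floorR. destruct (base_Int_part x). lra. Qed.

Lemma floor_unique x z : IZR z <= x < IZR z + 1 -> floorR x = z.
Proof.
  intros [H1 H2]. destruct (floor_spec x) as [H3 H4].
  assert (H5 : IZR z < IZR (floorR x + 1)) by (rewrite plus_IZR; lra).
  assert (H6 : IZR (floorR x) < IZR (z + 1)) by (rewrite plus_IZR; lra).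
  apply lt_IZR in H5. apply lt_IZR in H6. lia.
Qed.

Lemma floor_add2 x y : floorR (x+y) = (floorR x + floorR y)%Z \/
                       floorR (x+y) = (floorR x + floorR y + 1)%Z.
Proof.
  destruct (floor_spec x), (floor_spec y).
  destruct (Rlt_or_le (x + y) (IZR (floorR x + floorR y) + 1)).
  - left. apply floor_unique. rewrite plus_IZR in *. lra.
  - right. apply floor_unique. rewrite !plus_IZR in *. lra.
Qed.

Definition G (j : nat) : Z := floorR (INR j * alpha).

Lemma G_add a b : G (a + b) = (G a + G b)%Z \/ G (a + b) = (G a + G b + 1)%Z.
Proof. unfold G. rewrite plus_INR, Rmult_plus_distr_r. apply floor_add2. Qed.

Lemma G0 : G 0 = 0%Z.
Proof. unfold G. apply floor_unique. simpl. lra. Qed.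
Lemma G1 : G 1 = 0%Z.
Proof. unfold G. apply floor_unique. simpl. pose proof alpha_bounds. lra. Qed.
Lemma G2 : G 2 = 0%Z.
Proof. unfold G. apply floor_unique. simpl. pose proof alpha_bounds. lra. Qed.

Lemma G_spec m : IZR (G m) <= INR m * alpha < IZR (G m) + 1.
Proof. apply floor_spec. Qed.

Lemma G_step m : G (S m) = G m \/ G (S m) = (G m + 1)%Z.
Proof. replace (S m) with (m + 1)%nat by lia. pose proof G1. destruct (G_add m 1); lia. Qed.

Lemma G_step2 m : (G (m + 2) <= G m + 1)%Z.
Proof. destruct (G_add m 2); rewrite G2 in *; lia. Qed.

Lemma c_alpha_G n : c_alpha n = (G (n + 2) - G (n + 1))%Z.
Proof.
  unfold c_alpha, G. rewrite !plus_INR.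
  replace (INR 2) with 2 by (simpl; lra). replace (INR 1) with 1 by (simpl; lra).
  reflexivity.
Qed.

Lemma c01 n : c_alpha n = 0%Z \/ c_alpha n = 1%Z.
Proof.
  rewrite c_alpha_G. replace (n + 2)%nat with (S (n + 1)) by lia.
  destruct (G_step (n + 1)); lia.
Qed.

Definition K (i m : nat) : Z := (G (i + m + 1) - G (i + 1))%Z.

Lemma shom_formula s0 s1 m : forall i,
  Z.of_nat (S_hom s0 s1 (map c_alpha (seq i m))) =
  (Z.of_nat s0 * (Z.of_nat m - K i m) + Z.of_nat s1 * K i m)%Z.
Proof.
  induction m; intros i.
  - unfold K. simpl. replace (i + 0 + 1)%nat with (i + 1)%nat by lia. lia.
  - simpl map.
    change (S_hom s0 s1 (c_alpha i :: map c_alpha (seq (S i) m)))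
      with (S_letter s0 s1 (c_alpha i) + S_hom s0 s1 (map c_alpha (seq (S i) m)))%nat.
    rewrite Nat2Z.inj_add, IHm.
    assert (HK : K i (S m) = (c_alpha i + K (S i) m)%Z).
    { unfold K. rewrite c_alpha_G.
      replace (i + S m + 1)%nat with (S i + m + 1)%nat by lia.
      replace (S i + 1)%nat with (i + 2)%nat by lia. lia. }
    rewrite HK, Nat2Z.inj_succ. destruct (c01 i) as [H|H]; rewrite H; unfold S_letter; simpl Z.eqb; cbv iota; nia.
Qed.

Lemma nth_map_seq n i m d : (n < m)%nat -> nth n (map c_alpha (seq i m)) d = c_alpha (i+n).
Proof.
  revert n i; induction m; intros n i H; [lia|].
  destruct n; simpl.
  - f_equal; lia.
  - rewrite IHm by lia. f_equal; lia.
Qed.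

Lemma image_char s0 s1 n :
  in_image s0 s1 n <-> exists i m, (1 <= m)%nat /\
    Z.of_nat n = (Z.of_nat s0 * (Z.of_nat m - K i m) + Z.of_nat s1 * K i m)%Z.
Proof.
  split.
  - intros [w [[Hnil [i Hi]] Hw]].
    assert (Hweq : w = map c_alpha (seq i (length w))).
    { apply nth_ext with (d := 0%Z) (d' := 0%Z).
      - rewrite length_map, length_seq. reflexivity.
      - intros k Hk. rewrite Hi by lia. rewrite nth_map_seq by lia. reflexivity. }
    exists i, (length w). split.
    + destruct w; [congruence| simpl; lia].
    + rewrite <- Hw, Hweq at 1. rewrite shom_formula. reflexivity.
  - intros [i [m [Hm Heq]]].
    exists (map c_alpha (seq i m)). split.
    + split.
      * destruct m; [lia|]. simpl. discriminate.
      * exists i. intros k Hk. rewrite length_map, length_seq in Hk.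
        apply nth_map_seq. exact Hk.
    + apply Nat2Z.inj. rewrite shom_formula. lia.
Qed.

Lemma K_range i m : K i m = G m \/ K i m = (G m + 1)%Z.
Proof.
  unfold K. replace (i + m + 1)%nat with ((i + 1) + m)%nat by lia.
  destruct (G_add (i+1) m); lia.
Qed.

Lemma sq_mod5 p : ((p * p) mod 5 = 0 -> p mod 5 = 0)%Z.
Proof.
  intros H. rewrite Z.mul_mod in H by lia.
  pose proof (Z.mod_pos_bound p 5 ltac:(lia)).
  remember (p mod 5)%Z as r.
  assert (r = 0 \/ r = 1 \/ r = 2 \/ r = 3 \/ r = 4)%Z by lia.
  destruct H1 as [->|[->|[->|[->| ->]]]]; simpl in H; try discriminate; reflexivity.
Qed.

Lemma no_sqrt5_aux n : forall p q : Z, (Z.abs q < Z.of_nat n)%Z -> q <> 0%Z -> (p * p = 5 * q * q)%Z -> False.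
Proof.
  induction n; intros p q Hq Hq0 H; [lia|].
  assert (Hp : (p mod 5 = 0)%Z). { apply sq_mod5. rewrite H. rewrite <- Z.mul_assoc.
    rewrite Z.mul_comm. apply Z.mod_mul. lia. }
  pose proof (Z.div_mod p 5 ltac:(lia)) as Ep. rewrite Hp, Z.add_0_r in Ep.
  set (a := (p / 5)%Z) in *.
  assert (H2 : (q * q = 5 * a * a)%Z) by (rewrite Ep in H; nia).
  assert (Hq5 : (q mod 5 = 0)%Z). { apply sq_mod5. rewrite H2. rewrite <- Z.mul_assoc.
    rewrite Z.mul_comm. apply Z.mod_mul. lia. }
  pose proof (Z.div_mod q 5 ltac:(lia)) as Eq. rewrite Hq5, Z.add_0_r in Eq.
  set (b := (q / 5)%Z) in *.
  apply (IHn a b); [lia | lia | nia].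
Qed.

Lemma irr m z : (1 <= m)%nat -> INR m * alpha <> IZR z.
Proof.
  intros Hm H. rewrite alpha_eq in H.
  set (p := (3 * Z.of_nat m - 2 * z)%Z).
  assert (Hp : IZR p = sqrt 5 * INR m).
  { unfold p. rewrite minus_IZR, !mult_IZR, <- INR_IZR_INZ. lra. }
  assert (Hsq : IZR (p * p) = IZR (5 * Z.of_nat m * Z.of_nat m)).
  { rewrite !mult_IZR, Hp, <- INR_IZR_INZ. pose proof sqrt5_sq. nra. }
  apply eq_IZR in Hsq.
  apply (no_sqrt5_aux (S (Z.to_nat (Z.abs (Z.of_nat m)))) p (Z.of_nat m)); lia.
Qed.

Fixpoint fib (n : nat) : nat :=
  match n with 0 => 0 | S n' => match n' with 0 => 1 | S n'' => fib n' + fib n'' end end.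

Lemma fib_alpha_aux n :
  INR (fib n) * alpha = 2 * INR (fib n) - INR (fib (S n)) + psi ^ n /\
  INR (fib (S n)) * alpha = 2 * INR (fib (S n)) - INR (fib (S (S n))) + psi ^ (S n).
Proof.
  induction n.
  - simpl. rewrite alpha_psi. split; lra.
  - destruct IHn as [H1 H2]. split; [exact H2|].
    change (fib (S (S n))) with (fib (S n) + fib n)%nat in *.
    change (fib (S (S (S n)))) with (fib (S (S n)) + fib (S n))%nat.
    change (fib (S (S n))) with (fib (S n) + fib n)%nat.
    rewrite !plus_INR in *.
    assert (Hp : psi ^ (S (S n)) = psi ^ (S n) + psi ^ n).
    { simpl. rewrite <- Rmult_assoc, psi_sq. ring. }
    rewrite Hp. lra.
Qed.

Lemma fib_alpha n : INR (fib n) * alpha = 2 * INR (fib n) - INR (fib (S n)) + psi ^ n.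
Proof. apply fib_alpha_aux. Qed.

Lemma fib_pos n : (1 <= n)%nat -> (1 <= fib n)%nat.
Proof.
  intros Hn. assert (H : forall k, (1 <= fib (S k))%nat /\ (1 <= fib (S (S k)))%nat).
  { induction k; [simpl; lia|]. destruct IHk. split; [lia|].
    change (fib (S (S (S k)))) with (fib (S (S k)) + fib (S k))%nat. lia. }
  destruct n; [lia|]. apply H.
Qed.

Lemma psi_even k : 0 < psi ^ (2 * k).
Proof. rewrite pow_mult. apply pow_lt. simpl. pose proof psi_bounds. nra. Qed.

Lemma psi_odd k : psi ^ (S (2 * k)) < 0.
Proof. change (psi ^ S (2 * k)) with (psi * psi ^ (2 * k)). pose proof (psi_even k). pose proof psi_bounds. nra. Qed.

Lemma attain m : (1 <= m)%nat ->
  (exists i, K i m = G m) /\ (exists i, K i m = (G m + 1)%Z).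
Proof.
  intros Hm.
  pose proof (G_spec m) as [Hx1 Hx2].
  set (x := INR m * alpha - IZR (G m)).
  assert (Hx0 : 0 < x).
  { unfold x. destruct (Rle_lt_or_eq_dec _ _ Hx1); [lra|].
    exfalso. apply (irr m (G m) Hm). auto. }
  assert (Hx : x < 1) by (unfold x; lra).
  assert (Hpsi : Rabs psi < 1). { pose proof psi_bounds. rewrite Rabs_left by lra. lra. }
  assert (Gm_eq : INR m * alpha = IZR (G m) + x) by (unfold x; ring).
  split.
  - destruct (pow_lt_1_zero psi Hpsi (1 - x) ltac:(lra)) as [N HN].
    set (n := (2 * (S N))%nat).
    specialize (HN n ltac:(unfold n; lia)).
    pose proof (psi_even (S N)) as Hpos. fold n in Hpos.
    rewrite Rabs_pos_eq in HN by lra.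
    set (j := fib n). assert (Hj : (1 <= j)%nat) by (apply fib_pos; unfold n; lia).
    set (z := (2 * Z.of_nat j - Z.of_nat (fib (S n)))%Z).
    assert (Hz : INR j * alpha = IZR z + psi ^ n).
    { unfold z, j. rewrite fib_alpha, minus_IZR, mult_IZR, <- !INR_IZR_INZ. ring. }
    exists (j - 1)%nat. unfold K.
    replace (j - 1 + 1)%nat with j by lia.
    replace (j - 1 + m + 1)%nat with (j + m)%nat by lia.
    assert (E1 : G j = z). { unfold G. apply floor_unique. lra. }
    assert (E2 : G (j + m) = (z + G m)%Z).
    { unfold G at 1. apply floor_unique. rewrite plus_INR, Rmult_plus_distr_r, Hz, Gm_eq, plus_IZR. lra. }
    lia.
  - destruct (pow_lt_1_zero psi Hpsi x Hx0) as [N HN].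
    set (n := S (2 * N)).
    specialize (HN n ltac:(unfold n; lia)).
    pose proof (psi_odd N) as Hneg. fold n in Hneg.
    rewrite Rabs_left in HN by lra.
    set (j := fib n). assert (Hj : (1 <= j)%nat) by (apply fib_pos; unfold n; lia).
    set (z := (2 * Z.of_nat j - Z.of_nat (fib (S n)))%Z).
    assert (Hz : INR j * alpha = IZR z + psi ^ n).
    { unfold z, j. rewrite fib_alpha, minus_IZR, mult_IZR, <- !INR_IZR_INZ. ring. }
    exists (j - 1)%nat. unfold K.
    replace (j - 1 + 1)%nat with j by lia.
    replace (j - 1 + m + 1)%nat with (j + m)%nat by lia.
    assert (E1 : G j = (z - 1)%Z). { unfold G. apply floor_unique. rewrite minus_IZR. lra. }
    assert (E2 : G (j + m) = (z + G m)%Z).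
    { unfold G at 1. apply floor_unique. rewrite plus_INR, Rmult_plus_distr_r, Hz, Gm_eq, plus_IZR. lra. }
    lia.
Qed.

Definition vv (s0 s1 m : nat) (k : Z) : Z :=
  (Z.of_nat s0 * (Z.of_nat m - k) + Z.of_nat s1 * k)%Z.

Lemma reach s0 s1 n m k : (1 <= m)%nat -> (k = G m \/ k = (G m + 1)%Z) ->
  Z.of_nat n = vv s0 s1 m k -> in_image s0 s1 n.
Proof.
  intros Hm Hk Hn. destruct (attain m Hm) as [[i1 H1] [i2 H2]].
  apply image_char. destruct Hk as [-> | ->].
  - exists i1, m. rewrite H1. auto.
  - exists i2, m. rewrite H2. auto.
Qed.

Lemma cover (h : nat -> Z) : (forall m, (1 <= m)%nat -> (h m < h (S m))%Z) ->
  forall d : nat, exists m, (1 <= m)%nat /\ (h m <= h 1%nat + Z.of_nat d < h (S m))%Z.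
Proof.
  intros Hinc d. induction d.
  - exists 1%nat. specialize (Hinc 1%nat). lia.
  - destruct IHd as [m [Hm Hd]].
    destruct (Z_lt_le_dec (h 1%nat + Z.of_nat (S d)) (h (S m))).
    + exists m. lia.
    + exists (S m). specialize (Hinc (S m)). lia.
Qed.

Lemma part1 s0 s1 : in_E s0 s1 -> forall n : nat, (1 <= n)%nat -> in_image s0 s1 n.
Proof.
  intros HE n Hn. unfold in_E in HE.
  destruct HE as [H|[H|[H|H]]]; injection H as -> ->.
  - apply (reach 1 1 n n (G n)); auto. unfold vv. lia.
  - set (h := fun m => (Z.of_nat m + G m)%Z).
    destruct (cover h) with (d := (n - 1)%nat) as [m [Hm Hd]].
    { intros m _. unfold h. destruct (G_step m); lia. }
    unfold h in Hd. rewrite G1 in Hd.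
    destruct (G_step m) as [E|E]; rewrite E in Hd.
    + apply (reach 1 2 n m (G m)); auto. unfold vv. lia.
    + destruct (Z.eq_dec (Z.of_nat n) (Z.of_nat m + G m)).
      * apply (reach 1 2 n m (G m)); auto. unfold vv. lia.
      * apply (reach 1 2 n m (G m + 1)); auto. unfold vv. lia.
  - set (h := fun m => (Z.of_nat m + 2 * G m)%Z).
    destruct (cover h) with (d := (n - 1)%nat) as [m [Hm Hd]].
    { intros m _. unfold h. destruct (G_step m); lia. }
    unfold h in Hd. rewrite G1 in Hd.
    destruct (G_step m) as [E|E]; rewrite E in Hd.
    + apply (reach 1 3 n m (G m)); auto. unfold vv. lia.
    + destruct (Z.eq_dec (Z.of_nat n) (Z.of_nat m + 2 * G m)).
      * apply (reach 1 3 n m (G m)); auto. unfold vv. lia.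
      * destruct (Z.eq_dec (Z.of_nat n) (Z.of_nat m + 2 * G m + 2)).
        -- apply (reach 1 3 n m (G m + 1)); auto. unfold vv. lia.
        -- assert (Hm2 : (2 <= m)%nat).
           { destruct (Nat.eq_dec m 1); [|lia]. subst m. rewrite G1 in E.
             pose proof G2 as G2'. simpl in E. lia. }
           pose proof (G_step2 (m - 1)) as S2.
           replace (m - 1 + 2)%nat with (S m) by lia.
           pose proof (G_step (m - 1)) as S1.
           replace (S (m - 1)) with m in S1 by lia.
           replace (m - 1 + 2)%nat with (S m) in S2 by lia.
           apply (reach 1 3 n (m - 1) (G (m - 1) + 1)); [lia|auto|].
           unfold vv. lia.
  - set (h := fun m => (2 * Z.of_nat m - G m - 1)%Z).
    destruct (cover h) with (d := (n - 1)%nat) as [m [Hm Hd]].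
    { intros m _. unfold h. destruct (G_step m); lia. }
    unfold h in Hd. rewrite G1 in Hd.
    destruct (Z.eq_dec (Z.of_nat n) (2 * Z.of_nat m - G m - 1)).
    + apply (reach 2 1 n m (G m + 1)); auto. unfold vv. lia.
    + apply (reach 2 1 n m (G m)); auto. unfold vv. destruct (G_step m) as [E|E]; rewrite E in Hd; lia.
Qed.

Lemma flat_len (f g : nat -> nat) l : length (flat_map (fun m => f m :: g m :: nil) l) = (2 * length l)%nat.
Proof. induction l; simpl; [reflexivity|]. rewrite IHl. lia. Qed.

Lemma part2 s0 s1 (h0 : (1 <= s0)%nat) (h1 : (1 <= s1)%nat) : ~ in_E s0 s1 ->
  forall N : nat, exists n : nat, (N < n)%nat /\ ~ in_image s0 s1 n.
Proof.
  intros Hne N.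
  destruct (classic (s0 = 2%nat /\ s1 = 2%nat)) as [[-> ->]|H22].
  { exists (2 * N + 1)%nat. split; [lia|]. intros Himg.
    apply image_char in Himg. destruct Himg as [i [m [Hm Heq]]]. lia. }
  assert (Hcase : (3 <= s0 \/ (s0 = 2 /\ 3 <= s1) \/ (s0 = 1 /\ 4 <= s1))%nat).
  { destruct (le_lt_dec 3 s0); [left; lia|].
    assert (Hs : s0 = 1%nat \/ s0 = 2%nat) by lia.
    destruct Hs as [-> | ->].
    - destruct (le_lt_dec 4 s1); [right; right; lia|].
      exfalso. apply Hne. unfold in_E.
      assert (s1 = 1 \/ s1 = 2 \/ s1 = 3)%nat as [->|[->| ->]] by lia; auto.
    - destruct (le_lt_dec 3 s1); [right; left; lia|].
      exfalso. assert (s1 = 1 \/ s1 = 2)%nat as [->| ->] by lia.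
      + apply Hne. unfold in_E. auto.
      + apply H22. auto. }
  set (A := INR s0). set (B := INR s1).
  pose proof alpha_bounds as Hal.
  assert (HA1 : 1 <= A) by (unfold A; apply (le_INR 1); lia).
  assert (HB1 : 1 <= B) by (unfold B; apply (le_INR 1); lia).
  assert (Hc : A * (1 - alpha) + B * alpha >= 2.1).
  { destruct Hcase as [H|[[E H]|[E H]]].
    - assert (3 <= A) by (unfold A; apply le_INR in H; simpl in H; lra). nra.
    - assert (3 <= B) by (unfold B; apply le_INR in H; simpl in H; lra).
      assert (A = 2) by (unfold A; rewrite E; simpl; lra). nra.
    - assert (4 <= B) by (unfold B; apply le_INR in H; simpl in H; lra).
      assert (A = 1) by (unfold A; rewrite E; simpl; lra). nra. }
  apply NNPP. intro Hno.
  assert (Hall : forall n, (N < n)%nat -> in_image s0 s1 n).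
  { intros n Hn. apply NNPP. intro H. apply Hno. exists n. auto. }
  set (M := (10 * (N + s0 + s1 + 1))%nat).
  set (X := (2 * M + N + 1)%nat).
  assert (Hbound : forall n, in_image s0 s1 n -> (n <= X)%nat ->
    exists m, (1 <= m <= M)%nat /\
      (Z.of_nat n = vv s0 s1 m (G m) \/ Z.of_nat n = vv s0 s1 m (G m + 1))).
  { intros n Hi HnX. apply image_char in Hi. destruct Hi as [i [m [Hm Heq]]].
    exists m. split; [split; [exact Hm|]|].
    - destruct (le_lt_dec m M) as [|Hlt]; [assumption|exfalso].
      set (k := IZR (K i m)). set (mm := INR m).
      assert (Hr : INR n = A * (mm - k) + B * k).
      { apply (f_equal IZR) in Heq. rewrite plus_IZR, !mult_IZR, minus_IZR in Heq.
        rewrite <- !INR_IZR_INZ in Heq. exact Heq. }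
      assert (Hk : mm * alpha - 1 < k <= mm * alpha + 1).
      { pose proof (G_spec m) as [g1 g2]. unfold k, mm.
        destruct (K_range i m) as [E|E]; rewrite E; try rewrite plus_IZR; lra. }
      assert (Hmm0 : 0 <= mm) by (unfold mm; apply pos_INR).
      assert (Hn1 : INR n >= 2.1 * mm - (A + B)).
      { destruct (Rle_lt_dec A B).
        - assert (P1 : (B - A) * (k - (mm * alpha - 1)) >= 0) by nra.
          assert (P2 : mm * (A * (1 - alpha) + B * alpha - 2.1) >= 0) by nra.
          nra.
        - assert (P1 : (A - B) * (mm * alpha + 1 - k) >= 0) by nra.
          assert (P2 : mm * (A * (1 - alpha) + B * alpha - 2.1) >= 0) by nra.
          nra. }
      assert (HmM : INR M + 1 <= mm).
      { unfold mm. replace (INR M + 1) with (INR (S M)) by (rewrite S_INR; ring).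
        apply le_INR. lia. }
      assert (HMr : INR M = 10 * (INR N + A + B + 1)).
      { unfold M, A, B. rewrite mult_INR, !plus_INR. simpl. ring. }
      assert (HXr : INR n <= 2 * INR M + INR N + 1).
      { apply le_INR in HnX. unfold X in HnX. rewrite !plus_INR, mult_INR in HnX.
        simpl in HnX. lra. }
      lra.
    - destruct (K_range i m) as [E|E]; rewrite E in Heq; [left|right]; exact Heq. }
  set (L := flat_map (fun m => Z.to_nat (vv s0 s1 m (G m)) :: Z.to_nat (vv s0 s1 m (G m + 1)) :: nil) (seq 1 M)).
  assert (Hincl : incl (seq (S N) (X - N)) L).
  { intros n Hn. apply in_seq in Hn.
    destruct (Hbound n (Hall n ltac:(lia)) ltac:(lia)) as [m [Hm Hv]].
    unfold L. apply in_flat_map. exists m. split.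
    - apply in_seq. lia.
    - simpl. destruct Hv as [Hv|Hv]; rewrite <- Hv, Nat2Z.id; auto. }
  pose proof (NoDup_incl_length (seq_NoDup (X - N) (S N)) Hincl) as Hlen.
  unfold L in Hlen. rewrite flat_len, !length_seq in Hlen.
  unfold X in Hlen. lia.
Qed.

Theorem theorem6 (s0 s1 : nat) (h0 : (1 <= s0)%nat) (h1 : (1 <= s1)%nat) :
  (in_E s0 s1 -> forall n : nat, (1 <= n)%nat -> in_image s0 s1 n) /\
  (~ in_E s0 s1 ->
     forall N : nat, exists n : nat, (N < n)%nat /\ ~ in_image s0 s1 n).
Proof.
  split.
  - apply part1.
  - apply part2; assumption.
Qed.
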